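(* Let $T>0$ and let $b^k,b\in L^\infty\cap L^1(\mathbb{R}\times(0,T))$ for all $k\in\mathbb{N}$. Assume (i) there is a function $0\le L\in L^{1/2}([0,T])$ such that $|b^k(\cdot,t)|_{\mathrm{Lip}^+}\le L(t)$ for a.e. $t\in(0,T)$ and all $k\in\mathbb{N}$; (ii) $\lim_{k\to\infty}\|b^k-b\|_{L^\infty((0,T);L^1(\mathbb{R}))}=0$. Then for every $R>0$, $\lim_{k\to\infty}\|d_R(b^k;b)\|_{L^1(0,T)}=0$.
   Context: The one-sided Lipschitz constant is $|c|_{\mathrm{Lip}^+}\coloneqq\sup_{x\ne y}\frac{c(x)-c(y)}{x-y}$. For bounded measurable $b:\mathbb{R}\times(0,T)\to\mathbb{R}$, $K_R[b](x,t)\coloneqq\bigcap_{|N|=0}\overline{\mathrm{conv}}\bigl(b(B_R(x)\setminus N,t)\bigr)$, the closed convex hull of the essential range of $b(\cdot,t)$ over $(x-R,x+R)$, and $d_R(b^k;b)(t)\coloneqq\operatorname{ess\,sup}_{x\in\mathbb{R}}\operatorname{dist}\bigl(b^k(x,t),K_R[b](x,t)\bigr)$. *)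

(* Defs.v *)
From HB Require Import structures.
From mathcomp Require Import all_boot all_order all_algebra.
From mathcomp Require Import all_classical all_reals all_analysis ess_sup_inf.
Set Implicit Arguments. Unset Strict Implicit. Unset Printing Implicit Defensive.
Import Order.TTheory GRing.Theory Num.Theory.
Import numFieldNormedType.Exports.
Local Open Scope classical_set_scope.
Local Open Scope ring_scope.

Section defs.
Variable R : realType.

Definition cl_conv_hull (A : set R) : set R :=
  \bigcap_(C in [set C : set R | [/\ closed C,
       convex_set (C : set (convex_lmodType R^o)) & A `<=` C]]) C.

Definition K_R (r : R) (b : R -> R -> R) (x t : R) : set R :=
  \bigcap_(N in [set N : set R | measurable N /\ (lebesgue_measure N = 0)%E])
     cl_conv_hull ((fun y => b y t) @` (ball x r `\` N)).

(* distance from a point to a set of reals (extended real, +oo for empty set) *)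
Definition dist_set (y : R) (K : set R) : \bar R :=
  ereal_inf [set (`|y - z|)%:E | z in K].

Definition d_R (r : R) (bk b : R -> R -> R) (t : R) : \bar R :=
  ess_sup lebesgue_measure (fun x => dist_set (bk x t) (K_R r b x t)).

Definition ess_sup_on (D : set R) (f : R -> \bar R) : \bar R :=
  ereal_inf [set y | {ae lebesgue_measure, forall t, D t -> (f t <= y)%E}].

Definition LinfL1_norm (T : R) (f : R -> R -> R) : \bar R :=
  ess_sup_on `]0, T[ (fun t => (\int[lebesgue_measure]_x (`|f x t|)%:E)%E).

Definition lipplus_le (c : R -> R) (L : R) : Prop :=
  forall x y, x != y -> (c x - c y) / (x - y) <= L.

Definition leb2 := ((@lebesgue_measure R) \x (@lebesgue_measure R))%E.

Definition Linf_L1 (T : R) (b : R -> R -> R) : Prop :=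
  let D := [set: R] `*` `]0, T[%classic in
  measurable_fun D (fun p : R * R => b p.1 p.2) /\
  leb2.-integrable D
     (fun p : R * R => (b p.1 p.2)%:E) /\
  exists M : R, {ae leb2,
     forall p : R * R, D p -> (`|b p.1 p.2| <= M)%R}.

End defs.

(* Main.v *)
Require Import Defs.
From HB Require Import structures.
From mathcomp Require Import all_boot all_order all_algebra.
From mathcomp Require Import all_classical all_reals all_analysis ess_sup_inf.
From mathcomp Require Import ring lra.
From mathcomp Require Import measurable_realfun.
Import Order.TTheory GRing.Theory Num.Theory.
Import numFieldNormedType.Exports.
Local Open Scope classical_set_scope.
Local Open Scope ring_scope.

Section S.
Variable R : realType.

Lemma delta_bound (d eps Lt r : R) : 0 < r -> 0 <= Lt -> 0 <= eps -> 0 < d ->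
  (d * r / (2 * (Lt * r + d))) * (d / 2) <= eps ->
  d <= 4 * eps / r + Num.sqrt (4 * eps * Lt).
Proof.
move=> r0 L0 e0 d0 H.
set s := Num.sqrt _.
have s0 : 0 <= s by apply: sqrtr_ge0.
have s2 : s ^+ 2 = 4 * eps * Lt by rewrite sqr_sqrtr // !mulr_ge0.
have Lrd : 0 < Lt * r + d by rewrite ltr_wpDl // mulr_ge0 // ltW.
have H2 : d * d * r <= 4 * eps * (Lt * r + d).
  have E : d * r / (2 * (Lt * r + d)) * (d / 2) = (d * d * r) / (4 * (Lt * r + d)).
    by field; lra.
  move: H; rewrite E ler_pdivrMr; last lra.
  move=> h; nra.
rewrite -(ler_pM2r r0).
have -> : (4 * eps / r + s) * r = 4 * eps + s * r by field; lra.
rewrite leNgt; apply/negP => Hc.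
have : 0 < (d * r - (4 * eps + s * r)) * (d + s) by apply: mulr_gt0; lra.
move: s2; rewrite expr2 => s2.
nra.
Qed.

Local Notation mu := (@lebesgue_measure R).

Lemma ae_mono (P Q : R -> Prop) : (forall y, P y -> Q y) ->
  {ae mu, forall y, P y} -> {ae mu, forall y, Q y}.
Proof. by move=> PQ [N [mN N0 HN]]; exists N; split => // y nQ; apply: HN => hP; exact: nQ (PQ _ hP). Qed.

Lemma int_lb (h : R -> R) (s a c eps : R) : measurable_fun setT h -> 0 <= a -> 0 <= c ->
  (\int[mu]_y (`|h y|)%:E <= eps%:E)%E ->
  {ae mu, forall y, `[s, s + a]%classic y -> c <= `|h y|} -> a * c <= eps.
Proof.
move=> mh a0 c0 Hint Hae.
have H1 : (\int[mu]_(y in `[s, (s + a)%R]%classic) (cst c%:E) y <= \int[mu]_(y in `[s, (s + a)%R]%classic) (`|h y|)%:E)%E.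
  apply: ae_ge0_le_integral => //.
  apply/measurable_realfun.measurable_EFinP; apply: measurable_funTS; apply: measurableT_comp => //; exact: normr_measurable.
have H2 : (\int[mu]_(y in `[s, (s + a)%R]%classic) (`|h y|)%:E <= \int[mu]_y (`|h y|)%:E)%E.
  apply: ge0_subset_integral => //.
  apply/measurable_realfun.measurable_EFinP; apply: measurableT_comp => //; exact: normr_measurable.
move: (le_trans (le_trans H1 H2) Hint).
rewrite integral_cst // [X in (_ * X)%E]lebesgue_measure_itv /=.
case: ifPn => [_|]; last first.
  by rewrite lte_fin -leNgt => H _; rewrite (_ : a = 0) ?mul0r; [rewrite -lee_fin; apply: le_trans (integral_ge0 _ _) Hint => y _; rewrite lee_fin | lra].
by rewrite -EFinD -EFinM lee_fin => H; move: H; rewrite (addrC s) addrK mulrC.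
Qed.

Lemma lip_left (f : R -> R) Lt x y : lipplus_le f Lt -> y <= x -> f x - Lt * (x - y) <= f y.
Proof.
move=> hf; rewrite le_eqVlt => /predU1P[->|yx]; first by rewrite subrr mulr0 subr0.
have := hf x y; rewrite (gt_eqF yx) => /(_ isT).
rewrite ler_pdivrMr ?subr_gt0 // => h; lra.
Qed.

Lemma lip_right (f : R -> R) Lt x y : lipplus_le f Lt -> x <= y -> f y <= f x + Lt * (y - x).
Proof.
move=> hf; rewrite le_eqVlt => /predU1P[->|xy]; first by rewrite subrr mulr0 addr0.
have := hf y x; rewrite (gt_eqF xy) => /(_ isT).
rewrite ler_pdivrMr ?subr_gt0 // => h; lra.
Qed.

Lemma est_upper (f g : R -> R) (x r Lt eps u : R) :
  0 < r -> 0 <= Lt -> 0 <= eps -> measurable_fun setT f -> measurable_fun setT g ->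
  lipplus_le f Lt -> (\int[mu]_y (`|f y - g y|)%:E <= eps%:E)%E ->
  {ae mu, forall y, ball x r y -> g y <= u} ->
  f x - u <= 4 * eps / r + Num.sqrt (4 * eps * Lt).
Proof.
move=> r0 L0 e0 mf mg hf Hint Hae.
have B0 : 0 <= 4 * eps / r + Num.sqrt (4 * eps * Lt).
  by rewrite addr_ge0 ?sqrtr_ge0 // divr_ge0 ?mulr_ge0 // ltW.
have [d0|d0] := leP (f x - u) 0; first exact: le_trans d0 B0.
set d := f x - u in d0 *.
have dE : d = f x - u by [].
apply: delta_bound => //.
have Lrd : 0 < Lt * r + d by rewrite ltr_wpDl // mulr_ge0 // ltW.
set a := d * r / (2 * (Lt * r + d)).
have a0 : 0 <= a by rewrite /a divr_ge0 ?mulr_ge0 // ltW.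
have ar : a < r.
  rewrite /a ltr_pdivrMr; last lra.
  nra.
have La : Lt * a <= d / 2.
  rewrite /a mulrA ler_pdivrMr; last lra.
  nra.
apply: (@int_lb (fun y => f y - g y) (x - a)) => //.
- exact: measurable_realfun.measurable_funB.
- lra.
apply: ae_mono Hae => y Hy; rewrite /= in_itv /= => /andP [y1 y2].
have hb : ball x r y.
  rewrite /ball /= ger0_norm; lra.
have := Hy hb; have := @lip_left f Lt x y hf.
move=> /(_ ltac:(lra)) h1 h2.
have h3 : Lt * (x - y) <= Lt * a by apply: ler_wpM2l => //; lra.
rewrite ger0_norm; lra.
Qed.

Lemma est_lower (f g : R -> R) (x r Lt eps v : R) :
  0 < r -> 0 <= Lt -> 0 <= eps -> measurable_fun setT f -> measurable_fun setT g ->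
  lipplus_le f Lt -> (\int[mu]_y (`|f y - g y|)%:E <= eps%:E)%E ->
  {ae mu, forall y, ball x r y -> v <= g y} ->
  v - f x <= 4 * eps / r + Num.sqrt (4 * eps * Lt).
Proof.
move=> r0 L0 e0 mf mg hf Hint Hae.
have B0 : 0 <= 4 * eps / r + Num.sqrt (4 * eps * Lt).
  by rewrite addr_ge0 ?sqrtr_ge0 // divr_ge0 ?mulr_ge0 // ltW.
have [d0|d0] := leP (v - f x) 0; first exact: le_trans d0 B0.
set d := v - f x in d0 *.
have dE : d = v - f x by [].
apply: delta_bound => //.
have Lrd : 0 < Lt * r + d by rewrite ltr_wpDl // mulr_ge0 // ltW.
set a := d * r / (2 * (Lt * r + d)).
have a0 : 0 <= a by rewrite /a divr_ge0 ?mulr_ge0 // ltW.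
have ar : a < r.
  rewrite /a ltr_pdivrMr; last lra.
  nra.
have La : Lt * a <= d / 2.
  rewrite /a mulrA ler_pdivrMr; last lra.
  nra.
apply: (@int_lb (fun y => f y - g y) x) => //.
- exact: measurable_realfun.measurable_funB.
- lra.
apply: ae_mono Hae => y Hy; rewrite /= in_itv /= => /andP [y1 y2].
have hb : ball x r y.
  rewrite /ball /= ler0_norm; lra.
have := Hy hb; have := @lip_right f Lt x y hf.
move=> /(_ ltac:(lra)) h1 h2.
have h3 : Lt * (y - x) <= Lt * a by apply: ler_wpM2l => //; lra.
rewrite ler0_norm; lra.
Qed.

Lemma exists_out (A N : set R) : ~ negligible mu A -> measurable N -> mu N = 0%E ->
  exists y, A y /\ ~ N y.
Proof.
move=> nA mN N0; apply: contrapT => H; apply: nA; exists N; split => // y Ay.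
by apply: contrapT => nNy; apply: H; exists y.
Qed.

Lemma ball_nonneg (x r : R) : 0 < r -> ~ negligible mu (ball x r).
Proof.
move=> r0 /(negligibleP mu (measurable_realfun.measurable_ball x r)).
rewrite [X in X = _ -> _]lebesgue_measure_ball ?ltW // => /eqP; rewrite eqe mulrn_eq0 /= gt_eqF //.
Qed.

Lemma K_point (b : R -> R -> R) (t x r c be : R) : 0 < r -> 0 <= be ->
  (forall u, {ae mu, forall y, ball x r y -> b y t <= u} -> c - u <= be) ->
  (forall v, {ae mu, forall y, ball x r y -> v <= b y t} -> v - c <= be) ->
  forall et, 0 < et -> exists z, K_R r b x t z /\ `|c - z| <= be + et.
Proof.
move=> r0 be0 Hu Hv et et0.
set g := fun y => b y t.
set u := c - be - et; set v := c + be + et.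
have nu : ~ negligible mu [set y | ball x r y /\ u < g y].
  move=> hn; have : c - u <= be; last by rewrite /u; lra.
  apply: Hu; apply: negligibleS hn => y /= /not_implyP [hb hg]; split => //.
  by rewrite ltNge; apply/negP.
have nv : ~ negligible mu [set y | ball x r y /\ g y < v].
  move=> hn; have : v - c <= be; last by rewrite /v; lra.
  apply: Hv; apply: negligibleS hn => y /= /not_implyP [hb hg]; split => //.
  by rewrite ltNge; apply/negP.
have nb := @ball_nonneg x r r0.
pose P w := forall e, 0 < e -> ~ negligible mu [set y | ball x r y /\ w - e <= g y].
pose S := [set w | (u <= w /\ w <= v) /\ P w].
have uv : u <= v by rewrite /u /v; lra.
have Su : S u.
  split; first by split.
  move=> e e0 hn; apply: nu; apply: negligibleS hn => y /= [hb hg]; split => //.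
  by apply: le_trans (ltW hg); rewrite gerDl oppr_le0 ltW.
have hsS : has_sup S.
  split; first by exists u.
  by exists v => w [[_ ?] _].
set w := sup S.
have uw : u <= w by apply: sup_upper_bound.
have wv : w <= v by apply: ge_sup; [exists u | move=> w' [[_ ?] _]].
have Pw : P w.
  move=> e e0; have [w' [[u1 w1] Pw'] ww'] := sup_adherent e0 hsS.
  have e'0 : 0 < w' - (w - e) by rewrite subr_gt0.
  move=> hn; apply: (Pw' _ e'0); apply: negligibleS hn => y /= [hb hg]; split => //.
  by move: hg; rewrite opprB addrCA subrr addr0.
have Qw : forall e, 0 < e -> ~ negligible mu [set y | ball x r y /\ g y <= w + e].
  move=> e e0 hn.
  have [ve|ve] := leP v (w + e).
    apply: nv; apply: negligibleS hn => y /= [hb hg]; split => //.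
    exact: le_trans (ltW hg) ve.
  set w2 := w + e / 2.
  have nS : ~ S w2.
    move=> Sw2; have : w2 <= w by apply: sup_upper_bound.
    rewrite /w2; lra.
  have : ~ P w2 by move=> Pw2; apply: nS; split => //; split; rewrite /w2; lra.
  move=> /existsNP [e2 /not_implyP [e20 /contrapT hn2]].
  apply: nb; apply: negligibleS (negligibleU hn hn2) => y hb /=.
  have [hy|hy] := leP (g y) (w + e); [left|right]; split => //.
  rewrite /w2; apply: ltW; apply: le_lt_trans hy; lra.
exists w; split; last by rewrite ler_norml; rewrite /u /v in uw wv; lra.
move=> N [mN N0] C [Ccl Ccv Csub].
apply: Ccl => B /nbhs_ballP [e /= e0 heB].
have e20 : 0 < e / 2 by lra.
have [y1 [[hb1 hy1] nN1]] := @exists_out _ _ (Pw _ e20) mN N0.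
have [y2 [[hb2 hy2] nN2]] := @exists_out _ _ (Qw _ e20) mN N0.
have C1 : C (g y1) by apply: Csub; exists y1.
have C2 : C (g y2) by apply: Csub; exists y2.
have inB : forall z, `|w - z| < e -> B z.
  by move=> z hz; apply: heB; rewrite /ball /=.
have [h2|h2] := leP (w - e / 2) (g y2).
  exists (g y2); split => //; apply: inB; rewrite ltr_norml; lra.
have [h1|h1] := leP (g y1) (w + e / 2).
  exists (g y1); split => //; apply: inB; rewrite ltr_norml; lra.
exists w; split; last by apply: inB; rewrite subrr normr0.
have l0 : 0 <= (g y1 - w) / (g y1 - g y2) by rewrite divr_ge0 //; lra.
have l1 : (g y1 - w) / (g y1 - g y2) <= 1 by rewrite ler_pdivrMr; lra.
have := Ccv (g y2) (g y1) (Itv01 l0 l1) (mem_set C2) (mem_set C1).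
rewrite inE; congr C.
rewrite /conv /=. 
rewrite /unstable.onem -!/(GRing.scale _ _) /GRing.scale /=.
field; lra.
Qed.

Lemma dist_le (c be : R) (K : set R) :
  (forall et, 0 < et -> exists z, K z /\ `|c - z| <= be + et) -> (dist_set c K <= be%:E)%E.
Proof.
move=> H; apply/lee_addgt0Pr => e e0.
have [z [Kz hz]] := H e e0.
apply: ge_ereal_inf; exists (`|c - z|)%:E; first by exists z.
by rewrite -EFinD lee_fin.
Qed.

Lemma dist_ge0 (c : R) (K : set R) : (0 <= dist_set c K)%E.
Proof. by apply/ereal_infP => _ [z _ <-]; rewrite lee_fin. Qed.

Lemma muT_gt0 : (0 < mu [set: R])%E.
Proof.
have h : (0 < mu (ball (0%R:R) 1%R))%E.
  by rewrite [X in (_ < X)%E]lebesgue_measure_ball // lte_fin mulrn_wgt0.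
apply: lt_le_trans h _; apply: le_measure => //; rewrite inE //.
exact: measurable_realfun.measurable_ball.
Qed.

Lemma dR_bound (bk b : R -> R -> R) (t r Lt eps : R) :
  0 < r -> 0 <= Lt -> 0 <= eps ->
  measurable_fun setT (fun y => bk y t) -> measurable_fun setT (fun y => b y t) ->
  lipplus_le (fun y => bk y t) Lt ->
  (\int[mu]_y (`|bk y t - b y t|)%:E <= eps%:E)%E ->
  (`|d_R r bk b t| <= (4 * eps / r + Num.sqrt (4 * eps * Lt))%:E)%E.
Proof.
move=> r0 L0 e0 mf mg hf Hint.
have B0 : 0 <= 4 * eps / r + Num.sqrt (4 * eps * Lt).
  by rewrite addr_ge0 ?sqrtr_ge0 // divr_ge0 ?mulr_ge0 // ltW.
have d0 : (0 <= d_R r bk b t)%E.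
  by apply: ess_sup_gee; [exact: muT_gt0 | apply: nearW => x; exact: dist_ge0].
rewrite gee0_abs //; apply/ess_supP; apply: nearW => x.
apply: dist_le; apply: K_point => //.
- move=> u Hu; exact: (@est_upper (fun y => bk y t) (fun y => b y t) x r Lt eps u).
- move=> v Hv; exact: (@est_lower (fun y => bk y t) (fun y => b y t) x r Lt eps v).
Qed.

Lemma sec_meas (f : R -> R -> R) (T t : R) : Linf_L1 T f -> `]0, T[%classic t ->
  measurable_fun setT (fun y => f y t).
Proof.
move=> [mf _] Tt.
have -> : (fun y => f y t) = (fun p : R * R => f p.1 p.2) \o (pair^~ t) by [].
apply: (measurable_comp _ _ mf).
- by apply: measurableX => //; exact: measurable_itv.
- by move=> _ [y _ <-] /=; split.
- exact: pair2_measurable.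
Qed.

Lemma ae_mono2 (P Q W : R -> Prop) : (forall y, P y -> Q y -> W y) ->
  {ae mu, forall y, P y} -> {ae mu, forall y, Q y} -> {ae mu, forall y, W y}.
Proof.
move=> PQW [N1 [mN1 N10 HN1]] [N2 [mN2 N20 HN2]].
have hU : negligible mu (N1 `|` N2) by apply: negligibleU; [exists N1; split | exists N2; split].
case: hU => N [mN N0 HN]; exists N; split => // y nW; apply: HN.
apply: contrapT => /not_orP [n1 n2]; apply: nW; apply: PQW.
- by apply: contrapT => nP; apply: n1; apply: HN1.
- by apply: contrapT => nQ; apply: n2; apply: HN2.
Qed.

Import HBNNSimple.
Lemma le_int_nm (D : set R) (f g : R -> \bar R) : measurable D ->
  (forall x, D x -> (0 <= f x)%E) -> (forall x, D x -> (0 <= g x)%E) ->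
  measurable_fun D g -> {ae mu, forall x, D x -> (f x <= g x)%E} ->
  (\int[mu]_(x in D) f x <= \int[mu]_(x in D) g x)%E.
Proof.
move=> mD f0 g0 mg Hae.
rewrite ge0_integralE //; apply: ge_ereal_sup => _ [h hf <-].
rewrite -integralT_nnsfun [X in (_ <= X)%E]integral_mkcond.
apply: ae_ge0_le_integral => //.
- by move=> x _; rewrite lee_fin; exact: fun_ge0.
- by apply: measurableT_comp => //; exact: measurable_funP.
- by move=> x _; rewrite /patch; case: ifPn => // /set_mem; apply: g0.
- exact/(measurable_restrictT _ _).1.
apply: ae_mono Hae => x Hx _.
have := hf x; rewrite /patch; case: ifPn => [/set_mem Dx|_] hx.
  exact: le_trans hx (Hx Dx).
exact: hx.
Qed.
End S.

Theorem lemma5p1 (R : realType) (T : R) (bk : nat -> R -> R -> R) (b : R -> R -> R)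
  (L : R -> R) :
  0 < T ->
  (forall k, Linf_L1 T (bk k)) -> Linf_L1 T b ->
  (* (i) 0 <= L in L^{1/2}([0,T]) and |bk(.,t)|_{Lip+} <= L(t) a.e. *)
  (forall t, 0 <= L t) ->
  measurable_fun `[0%R, T]%classic L ->
  (\int[lebesgue_measure]_(t in `[0%R, T]%classic) (Num.sqrt (L t))%:E < +oo)%E ->
  (forall k, {ae lebesgue_measure, forall t, `]0%R, T[%classic t ->
      lipplus_le (fun x => bk k x t) (L t)}) ->
  (* (ii) *)
  LinfL1_norm T (fun x t => bk k x t - b x t) @[k --> \oo] --> 0%E ->
  forall r : R, 0 < r ->
    (\int[lebesgue_measure]_(t in `]0%R, T[%classic) `|d_R r (bk k) b t|)%E @[k --> \oo] --> 0%E.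
Proof.
move=> T0 Hbk Hb HL0 HLm HLi Hlip Hconv r r0.
set J := (\int[lebesgue_measure]_(t in `[0%R, T]%classic) (Num.sqrt (L t))%:E)%E in HLi.
have J0 : (0 <= J)%E by apply: integral_ge0 => t _; rewrite lee_fin sqrtr_ge0.
set I := fine J.
have I0 : 0 <= I by apply: fine_ge0.
have JI : J = I%:E by rewrite fineK // ge0_fin_numE.
have mS : measurable_fun `]0%R, T[%classic (fun t => Num.sqrt (L t)).
  apply: (measurable_funS (measurable_itv `[0%R, T])) => //.
    by move=> t; rewrite /= !in_itv /= => /andP [h1 h2]; rewrite !ltW.
  change (measurable_fun `[0%R, T]%classic (Num.sqrt \o L)).
  apply: measurableT_comp => //; apply: continuous_measurable_fun; exact: sqrt_continuous.
have u0 : forall k, (0 <= \int[lebesgue_measure]_(t in `]0%R, T[%classic) `|d_R r (bk k) b t|)%E.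
  by move=> k; apply: integral_ge0 => t _; exact: abse_ge0.
have claim : forall e, 0 < e -> \forall k \near \oo,
    (\int[lebesgue_measure]_(t in `]0%R, T[%classic) `|d_R r (bk k) b t| <= e%:E)%E.
  move=> e e0.
  set D := 4 * T / r + 2 * I + 1 + e.
  have T4 : 0 <= 4 * T / r by rewrite divr_ge0 ?mulr_ge0 // ltW.
  have D0 : 0 < D by rewrite /D; lra.
  set s := e / D.
  have s0 : 0 < s by rewrite divr_gt0.
  have s1 : s < 1 by rewrite /s ltr_pdivrMr // mul1r /D; lra.
  have sD : s * D = e by rewrite /s divfK // gt_eqF.
  set eps := s ^+ 2.
  have eps0 : 0 < eps by rewrite exprn_gt0.
  have [finF cvF] := (fine_cvgP _ _).1 Hconv.
  have := cvF; move=> /cvgr0Pnorm_lt /(_ eps eps0) hlt.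
  apply: filterS2 finF hlt => k fk hk.
  have lt1 : (LinfL1_norm T (fun x t => (bk k x t - b x t)%R) < eps%:E)%E.
    rewrite -(fineK fk) lte_fin; apply: le_lt_trans hk; exact: ler_norm.
  have [y Sy yeps] := ereal_inf_lt lt1.
  apply: (@le_trans _ _ (\int[lebesgue_measure]_(t in `]0%R, T[%classic)
     ((4 * eps / r)%:E + (2 * s)%:E * (Num.sqrt (L t))%:E))%E).
    apply: le_int_nm => //.
    - move=> t _; rewrite -EFinM -EFinD lee_fin.
      have h1 : 0 <= 4 * eps / r by apply: divr_ge0; lra.
      have h2 : 0 <= 2 * s * Num.sqrt (L t) by apply: mulr_ge0; [lra | exact: sqrtr_ge0].
      lra.
    - by apply: emeasurable_funD => //; apply: emeasurable_funM => //; exact: measurableT_comp.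
    - apply: ae_mono2 Sy (Hlip k) => t h1 h2 Tt.
      have := @dR_bound R (bk k) b t r (L t) eps r0 (HL0 t) (ltW eps0)
        (@sec_meas R (bk k) T t (Hbk k) Tt) (@sec_meas R b T t Hb Tt) (h2 Tt).
      have hi : (\int[lebesgue_measure]_y (`|bk k y t - b y t|)%:E <= eps%:E)%E.
        exact: le_trans (h1 Tt) (ltW yeps).
      move=> /(_ hi); rewrite -EFinM -EFinD.
      suff -> : Num.sqrt (4 * eps * L t) = 2 * s * Num.sqrt (L t) by [].
      rewrite sqrtrM; last lra.
      rewrite /eps; congr (_ * _).
      have h4 : 4 * s ^+ 2 = (2 * s) ^+ 2 by rewrite !expr2; lra.
      by rewrite h4 sqrtr_sqr ger0_norm //; lra.
  rewrite ge0_integralD //.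
  all: try (by move=> t _; rewrite lee_fin; apply: divr_ge0; lra).
  all: try (by move=> t _; rewrite -EFinM lee_fin; apply: mulr_ge0; [lra | exact: sqrtr_ge0]).
  all: try (by apply: emeasurable_funM => //; exact: measurableT_comp).
  rewrite integral_cst // [X in ((_ * X) + _)%E]lebesgue_measure_itv /= lte_fin T0 /=.
  rewrite -EFinB subr0 -EFinM.
  rewrite ge0_integralZl_EFin //.
  all: try (by move=> t _; rewrite lee_fin sqrtr_ge0).
  all: try (by exact: measurableT_comp).
  2: by apply: mulr_ge0 => //; apply: ltW.
  have hsub : (\int[lebesgue_measure]_(t in `]0%R, T[%classic) (Num.sqrt (L t))%:E <= I%:E)%E.
    rewrite -JI; apply: ge0_subset_integral => //.
    - change (measurable_fun `[0%R, T]%classic (EFin \o (Num.sqrt \o L))).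
      apply: measurableT_comp => //; apply: measurableT_comp => //.
      apply: continuous_measurable_fun; exact: sqrt_continuous.
    - by move=> t; rewrite /= !in_itv /= => /andP [h1 h2]; rewrite !ltW.
  apply: (@le_trans _ _ ((4 * eps / r * T)%:E + (2 * s)%:E * I%:E)%E).
    apply: leeD => //; apply: lee_pmul => //; [rewrite lee_fin; lra | exact: integral_ge0 => t _; rewrite lee_fin sqrtr_ge0].
  rewrite -EFinM -EFinD lee_fin.
  have E1 : 4 * eps / r * T = s * s * (4 * T / r) by rewrite /eps expr2; field; lra.
  rewrite E1; rewrite -sD /D.
  set A := 4 * T / r in T4 *.
  have h1 : s * s * A <= s * A by have := mulr_ge0 (ltW s0) T4; nra.
  have h2 : 0 <= s * (1 + e) by apply: mulr_ge0; lra.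
  have -> : s * (A + 2 * I + 1 + e) = s * A + 2 * s * I + s * (1 + e) by ring.
  lra.
apply/fine_cvgP; split.
  apply: filterS (claim 1 ltr01) => k hk.
  by rewrite ge0_fin_numE // (le_lt_trans hk) // ltry.
apply/cvgr0Pnorm_le => e e0; apply: filterS (claim e e0) => k hk /=.
rewrite ger0_norm ?fine_ge0 //.
have fk : (\int[lebesgue_measure]_(t in `]0%R, T[%classic) `|d_R r (bk k) b t|)%E \is a fin_num.
  by rewrite ge0_fin_numE // (le_lt_trans hk) // ltry.
by rewrite -lee_fin fineK.
Qed.
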